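(* Let $\Pi$ be a min-FGPP with $\alpha_2\ge\frac{\alpha_1}{2}>0$. Let $(G=(V,E),k,p)$ be an instance of $\Pi$, let $x=\max\{\frac{p}{\alpha_2},\min\{\frac{p}{\alpha_1},\frac{p}{\alpha_2}+(1-\frac{\alpha_1}{\alpha_2})k\}\}$, write $E=\{e_1,\dots,e_{|E|}\}$, and let $\mathcal{F}$ be an $(|E|,x)$-universal set. For each $f\in\mathcal{F}$ let $G_f$ be a copy of $G$ in which the copy of $e_i$ is colored red if $f(i)=0$ and blue if $f(i)=1$. Then $(G,k,p)$ is a yes-instance of $\Pi$ if and only if at least one of the instances $(G_f,k,p)$, $f\in\mathcal{F}$, is a yes-instance of EC-$\Pi$.
   Context: Graphs are finite, simple and undirected. For $X\subseteq V$, $E(X)$ is the set of edges with both endpoints in $X$, $E(X,V\setminus X)$ the set of edges with exactly one endpoint in $X$, and $\mathrm{val}(X)=\alpha_1|E(X)|+\alpha_2|E(X,V\setminus X)|$. The min-FGPP $\Pi$: given $G=(V,E)$, $k\in\mathbb{N}$, $p\in\mathbb{R}$, decide whether some $X\subseteq V$ with $|X|=k$ has $\mathrm{val}(X)\le p$. For a graph whose edges are each colored red or blue and $X\subseteq V$, let $\mathrm{C}(X)$ be the family of node-sets of maximal connected components of the graph $(X,E_r)$, where $E_r$ is the set of red edges with both endpoints in $X$, and let $\mathrm{val}^*(X)=\sum_{C\in\mathrm{C}(X)}\mathrm{val}(C)$ (with $\mathrm{val}$ computed in the whole graph, ignoring colors). EC-$\Pi$: given such an edge-colored graph, $k\in\mathbb{N}$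 and $p\in\mathbb{R}$, decide whether there is $X\subseteq V$ with $|X|=k$ such that all edges of $E(X,V\setminus X)$ are blue and $\mathrm{val}^*(X)\le p$. For real $t\ge0$, a set $\mathcal{F}$ of functions $\{1,\dots,n\}\to\{0,1\}$ is an $(n,t)$-universal set if for every $I\subseteq\{1,\dots,n\}$ with $|I|\le t$ and every $f':I\to\{0,1\}$ there is $f\in\mathcal{F}$ with $f(i)=f'(i)$ for all $i\in I$. *)

(* Defs.v *)
From HB Require Import structures.
From mathcomp Require Import all_boot all_order all_algebra.
Set Implicit Arguments. Unset Strict Implicit. Unset Printing Implicit Defensive.
Import Order.TTheory GRing.Theory Num.Theory.
Local Open Scope ring_scope.

Definition simple_graph (T : finType) (e : rel T) : Prop :=
  symmetric e /\ irreflexive e.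

Definition edgeset (T : finType) (e : rel T) : {set {set T}} :=
  [set A : {set T} | [exists x, exists y, e x y && (A == [set x; y])]].

Definition nE (T : finType) (e : rel T) (X : {set T}) : nat :=
  #|[set A in edgeset e | A \subset X]|.

Definition nCut (T : finType) (e : rel T) (X : {set T}) : nat :=
  #|[set A in edgeset e | #|A :&: X| == 1%N]|.

Definition cutset (T : finType) (e : rel T) (X : {set T}) : {set {set T}} :=
  [set A in edgeset e | #|A :&: X| == 1%N].

Definition fval (R : realFieldType) (a1 a2 : R) (T : finType) (e : rel T)
  (X : {set T}) : R :=
  a1 * (nE e X)%:R + a2 * (nCut e X)%:R.

Definition Pi_yes (R : realFieldType) (a1 a2 : R) (T : finType) (e : rel T)
  (k : nat) (p : R) : Prop :=
  exists X : {set T}, #|X| = k /\ fval a1 a2 e X <= p.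

(* Edge colouring: col A = true means edge A is blue, false means red. *)
Definition red_rel (T : finType) (e : rel T) (col : {set T} -> bool)
  (X : {set T}) : rel T :=
  [rel u v | [&& u \in X, v \in X, e u v & ~~ col [set u; v]]].

Definition red_comps (T : finType) (e : rel T) (col : {set T} -> bool)
  (X : {set T}) : {set {set T}} :=
  [set [set v in X | connect (red_rel e col X) u v] | u in X].

Definition fval_star (R : realFieldType) (a1 a2 : R) (T : finType) (e : rel T)
  (col : {set T} -> bool) (X : {set T}) : R :=
  \sum_(C in red_comps e col X) fval a1 a2 e C.

Definition ECPi_yes (R : realFieldType) (a1 a2 : R) (T : finType) (e : rel T)
  (col : {set T} -> bool) (k : nat) (p : R) : Prop :=
  exists X : {set T}, [/\ #|X| = k,
    (forall A, A \in cutset e X -> col A = true) &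
    fval_star a1 a2 e col X <= p].

Definition universal_set (R : realFieldType) (n : nat) (t : R)
  (F : {set {ffun 'I_n -> bool}}) : Prop :=
  forall (I : {set 'I_n}), (#|I|%:R <= t) ->
  forall f' : 'I_n -> bool, exists2 f, f \in F & forall i, i \in I -> f i = f' i.

Definition colour_of (T : finType) (m : nat) (ed : 'I_m -> {set T})
  (f : {ffun 'I_m -> bool}) : {set T} -> bool :=
  fun A => [exists i, (ed i == A) && f i].

(* Main.v *)
Require Import Defs.
From HB Require Import structures.
From mathcomp Require Import all_boot all_order all_algebra ring lra zify.
Import Order.TTheory GRing.Theory Num.Theory.
Local Open Scope ring_scope.
Set Implicit Arguments. Unset Strict Implicit.

Ltac solve_set x y hx hy := apply/setP; let z := fresh "z" in intro z; rewrite !inE; case: (z =P x) => [?|?]; case: (z =P y) => [?|?]; subst; rewrite /= ?hx ?hy ?eqxx ?andbT ?andbF ?orbT ?orbF //=; try by match goal with H : is_true (?a != ?a) |- _ => by rewrite eqxx in H end.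

Section Val.
Variables (R : realFieldType) (a1 a2 : R) (T : finType) (e : rel T).
Hypothesis hG : simple_graph e.

Lemma edge2 A : A \in edgeset e -> exists x y, [/\ e x y, x != y & A = [set x; y]].
Proof.
rewrite inE => /existsP[x /existsP[y /andP[exy /eqP ->]]].
exists x, y; split => //; apply/eqP => xy; subst y.
by case: hG => _ /(_ x); rewrite exy.
Qed.

Definition W (C A : {set T}) : R :=
  a1 * (A \subset C)%:R + a2 * (#|A :&: C| == 1)%N%:R.

Lemma card_sumR (E : {set {set T}}) (P : pred {set T}) :
  (#|[set A in E | P A]|%:R : R) = \sum_(A in E) (P A)%:R.
Proof.
rewrite -sum1_card natr_sum (eq_bigl (fun A => (A \in E) && P A)); last first.
  by move=> A; rewrite inE.
rewrite big_mkcondr /=; apply: eq_bigr => A _; by case: (P A).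
Qed.

Lemma fvalE C : fval a1 a2 e C = \sum_(A in edgeset e) W C A.
Proof.
rewrite /fval /nE /nCut !card_sumR !mulr_sumr -big_split /=.
by apply: eq_bigr.
Qed.

Lemma W2 C x y : x != y -> W C [set x; y] =
  a1 * ((x \in C)%:R * (y \in C)%:R) +
  a2 * ((x \in C)%:R + (y \in C)%:R - 2 * ((x \in C)%:R * (y \in C)%:R)).
Proof.
move=> nxy; rewrite /W subUset !sub1set.
case hx: (x \in C); case hy: (y \in C) => /=.
- have -> : [set x; y] :&: C = [set x; y] by solve_set x y hx hy.
  rewrite cards2 nxy /= ?mulr1 ?mul1r. lra.
- have -> : [set x; y] :&: C = [set x] by solve_set x y hx hy.
  rewrite cards1 /= ?mulr1 ?mul1r ?mulr0 ?mul0r. lra.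
- have -> : [set x; y] :&: C = [set y] by solve_set x y hx hy.
  rewrite cards1 /= ?mulr1 ?mul1r ?mulr0 ?mul0r. lra.
- have -> : [set x; y] :&: C = set0 by solve_set x y hx hy.
  rewrite cards0 /= ?mulr1 ?mul1r ?mulr0 ?mul0r. lra.
Qed.

Section Comp.
Variables (col : {set T} -> bool) (X : {set T}).
Let r := red_rel e col X.
Let cls u := [set v in X | connect r u v].

Lemma r_sym : symmetric r.
Proof.
case: hG => hs _ u v; rewrite /r /red_rel /= hs setUC.
by case: (u \in X); case: (v \in X).
Qed.

Lemma cls_eq u w : connect r u w -> cls u = cls w.
Proof.
move=> h; apply/setP => v; rewrite !inE.
by rewrite (same_connect (sym_connect_sym r_sym) h).
Qed.

Lemma sum_in x (g : {set T} -> R) :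
  \sum_(C in red_comps e col X) (x \in C)%:R * g C = (x \in X)%:R * g (cls x).
Proof.
rewrite (eq_bigr (fun C : {set T} => if x \in C then g C else 0)); last first.
  by move=> C _; case: (x \in C); rewrite ?mul1r ?mul0r.
rewrite -big_mkcondr.
case xX: (x \in X).
- rewrite (bigD1 (cls x)) /=; last first.
    rewrite /red_comps; apply/andP; split; first by apply: imset_f.
    by rewrite inE xX connect0.
  rewrite big1 ?addr0 ?mul1r //.
  move=> C /andP[/andP[/imsetP[u uX ->] xC] neq].
  move: xC; rewrite inE => /andP[_ /cls_eq hc].
  by move: neq; rewrite -/(cls u) hc eqxx.
- rewrite big1 ?mul0r //.
  move=> C /andP[/imsetP[u uX ->]]; rewrite inE => /andP[]; by rewrite xX.
Qed.

Lemma sumW x y : x != y ->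
  \sum_(C in red_comps e col X) W C [set x; y] =
  let bx := (x \in X)%:R in let by_ := (y \in X)%:R in
  let n2 := bx * (y \in cls x)%:R in
  a1 * n2 + a2 * (bx + by_ - 2 * n2).
Proof.
move=> nxy /=.
rewrite (eq_bigr (fun C : {set T} => (a1 - 2 * a2) * ((x \in C)%:R * (y \in C)%:R)
   + a2 * ((x \in C)%:R * 1) + a2 * ((y \in C)%:R * 1))); last first.
  by move=> C _; rewrite W2 //; move: ((x \in C)%:R) ((y \in C)%:R) => u v; ring.
rewrite !big_split /= -!mulr_sumr !sum_in.
rewrite ?mulr1. move: ((x \in X)%:R) ((y \in X)%:R) ((y \in cls x)%:R) => u v w. lra.
Qed.

Lemma val_le : a1 <= 2 * a2 -> fval a1 a2 e X <= fval_star a1 a2 e col X.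
Proof.
move=> h; rewrite /fval_star.
under eq_bigr do rewrite fvalE.
rewrite exchange_big /= fvalE; apply: ler_sum => A /edge2[x [y [exy nxy ->]]].
rewrite sumW // W2 //= inE.
case: (x \in X); case: (y \in X); case: (connect r x y) => /=;
  rewrite ?mulr1 ?mul1r ?mulr0 ?mul0r; lra.
Qed.

Lemma val_eq : (forall x y, x \in X -> y \in X -> e x y -> connect r x y) ->
  fval_star a1 a2 e col X = fval a1 a2 e X.
Proof.
move=> h; rewrite /fval_star.
under eq_bigr do rewrite fvalE.
rewrite exchange_big /= fvalE; apply: eq_bigr => A /edge2[x [y [exy nxy ->]]].
rewrite sumW // W2 //= inE.
case xX: (x \in X); case yX: (y \in X) => /=;
  rewrite ?(h x y xX yX exy) /= ?mulr1 ?mul1r ?mulr0 ?mul0r; lra.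
Qed.
End Comp.
End Val.

Local Close Scope ring_scope.
Section Forest.
Variables (T : finType) (X : {set T}).

Definition rof (S : {set {set T}}) : rel T := fun u v => [set u; v] \in S.
Definition clsS S u := [set v in X | connect (rof S) u v].
Definition Phi S := #|[set clsS S u | u in X]|.

Lemma rof_sym (S : {set {set T}}) : symmetric (rof S).
Proof. by move=> u v; rewrite /rof setUC. Qed.

Lemma conn_pair (r : rel T) x y u v : connect_sym r -> connect r x y ->
  [set u; v] = [set x; y] -> connect r u v.
Proof.
move=> hs hc huv.
have : u \in [set x; y] by rewrite -huv set21.
have : v \in [set x; y] by rewrite -huv set22.
rewrite !inE => /orP[/eqP-> | /eqP->] /orP[/eqP-> | /eqP->]; rewrite ?connect0 //.
by rewrite hs.
Qed.

Lemma clsS_eq (S : {set {set T}}) u w : connect (rof S) u w -> clsS S u = clsS S w.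
Proof.
move=> h; apply/setP => v; rewrite !inE.
by rewrite (same_connect (sym_connect_sym (@rof_sym S)) h).
Qed.

Lemma rof_mono (S S' : {set {set T}}) u v : S \subset S' -> connect (rof S) u v -> connect (rof S') u v.
Proof.
move=> sub; apply: connect_sub => a b h; apply: connect1.
by rewrite /rof (subsetP sub).
Qed.

Lemma Phi_step (S : {set {set T}}) x y : x \in X -> y \in X -> ~~ connect (rof S) x y ->
  Phi ([set x; y] |: S) < Phi S.
Proof.
move=> xX yX nc.
set S' := [set x; y] |: S.
have sub : S \subset S' by apply/subsetP => A AS; rewrite in_setU1 AS orbT.
pose g (C : {set T}) := if [pick v in C] is Some v then clsS S' v else set0.
have gE u : u \in X -> g (clsS S u) = clsS S' u.
  move=> uX; rewrite /g; case: pickP => [v | /(_ u)].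
    rewrite inE => /andP[_ /(rof_mono sub) h]; by rewrite (clsS_eq h).
  by rewrite inE uX connect0.
set K := [set clsS S u | u in X].
have -> : Phi S' = #|[set g C | C in K]|.
  rewrite /Phi /K; suff -> : [set clsS S' u | u in X] = [set (g \o clsS S) u | u in X] by rewrite -imset_comp.
  apply/setP => D; apply/imsetP/imsetP => -[u uX ->]; exists u => //=; by rewrite gE.
have cxK : clsS S x \in K by apply: imset_f.
have cyK : clsS S y \in K by apply: imset_f.
have cxy : clsS S y != clsS S x.
  apply/eqP => h; move: (nc); have : y \in clsS S y by rewrite inE yX connect0.
  by rewrite h inE => /andP[_ ->].
have gxy : g (clsS S x) = g (clsS S y).
  rewrite !gE //; apply: clsS_eq; apply: connect1; by rewrite /rof in_setU1 eqxx.
have : [set g C | C in K] \subset [set g C | C in K :\ clsS S x].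
  apply/subsetP => D /imsetP[C CK ->].
  case: (C =P clsS S x) => [->|nC].
    rewrite gxy; apply: imset_f; by rewrite in_setD1 cxy cyK.
  apply: imset_f; rewrite in_setD1 CK andbT; exact/eqP.
move/subset_leq_card => h1.
apply: (leq_ltn_trans h1); apply: (leq_ltn_trans (leq_imset_card _ _)).
by rewrite /Phi -/K (cardsD1 (clsS S x) K) cxK.
Qed.

Lemma forest (s : seq {set T}) :
  (forall A, A \in s -> exists x y, [/\ x \in X, y \in X & A = [set x; y]]) ->
  exists S : {set {set T}}, [/\ {subset S <= s}, #|S| + Phi S <= #|X| &
    forall x y, [set x; y] \in s -> connect (rof S) x y].
Proof.
elim: s => [_|A s IH hs].
  exists set0; split => //; first by move=> A; rewrite inE.
  by rewrite cards0 add0n leq_imset_card.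
have [S [Ss hS hc]] : exists S : {set {set T}}, [/\ {subset S <= s}, #|S| + Phi S <= #|X| &
    forall x y, [set x; y] \in s -> connect (rof S) x y].
  by apply: IH => B Bs; apply: hs; rewrite inE Bs orbT.
have [x [y [xX yX ->]]] := hs A (mem_head _ _).
case cxy: (connect (rof S) x y).
  exists S; split.
  - by move=> B /Ss Bs; rewrite inE Bs orbT.
  - exact: hS.
  - move=> u v; rewrite inE => /orP[/eqP huv | /hc //].
    exact: conn_pair (sym_connect_sym (@rof_sym S)) cxy huv.
have sub : S \subset [set x; y] |: S by apply/subsetP => B BS; rewrite in_setU1 BS orbT.
exists ([set x; y] |: S); split.
- move=> B; rewrite in_setU1 => /orP[/eqP ->|/Ss Bs]; first exact: mem_head.
  by rewrite inE Bs orbT.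
- have := Phi_step xX yX (negbT cxy).
  rewrite cardsU1 => hlt; apply: leq_trans hS.
  case: (_ \notin _) => /=; lia.
- move=> u v; rewrite inE => /orP[/eqP huv | /hc h].
    by apply: connect1; rewrite /rof huv in_setU1 eqxx.
  exact: rof_mono sub h.
Qed.
End Forest.

Unset Implicit Arguments. Set Strict Implicit.
Local Open Scope ring_scope.

Lemma arith (R : realFieldType) (a1 a2 a' a b k p : R) :
  0 < a1 -> a1 <= 2 * a2 -> 0 <= a' -> a' <= a -> a' <= k -> 0 <= b ->
  a1 * a + a2 * b <= p ->
  a' + b <= Num.max (p / a2) (Num.min (p / a1) (p / a2 + (1 - a1 / a2) * k)).
Proof.
move=> h1 h2 ha' haa hak hb hp.
have a2p : 0 < a2 by lra.
case: (lerP a2 a1) => h.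
- rewrite le_max ler_pdivlMr //; apply/orP; left; nra.
- rewrite le_max; apply/orP; right; rewrite le_min; apply/andP; split.
    rewrite ler_pdivlMr //; nra.
  have -> : p / a2 + (1 - a1 / a2) * k = (p + (a2 - a1) * k) / a2.
    by field; apply/eqP; lra.
  rewrite ler_pdivlMr //; nra.
Qed.

Lemma edge_e (T : finType) (e : rel T) (hG : simple_graph e) u v :
  [set u; v] \in edgeset e -> e u v.
Proof.
move=> /(edge2 hG) [x [y [exy nxy huv]]].
have hu : u \in [set x; y] by rewrite -huv set21.
have hv : v \in [set x; y] by rewrite -huv set22.
have hy : y \in [set u; v] by rewrite huv set22.
have hx : x \in [set u; v] by rewrite huv set21.
case: hG => hs _.
move: hu hv hx hy; rewrite !inE.
case/orP=> /eqP-> ; case/orP=> /eqP-> => hx hy.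
- by move: hy; rewrite orbb => /eqP h; move: nxy; rewrite h eqxx.
- exact: exy.
- by rewrite hs.
- by move: hx; rewrite orbb => /eqP h; move: nxy; rewrite h eqxx.
Qed.

Theorem lemma13 (R : realFieldType) (a1 a2 : R)
  (ha1 : 0 < a1 / 2) (ha2 : a1 / 2 <= a2)
  (T : finType) (e : rel T) (hG : simple_graph e)
  (k : nat) (p : R)
  (m : nat) (ed : 'I_m -> {set T}) (ed_inj : injective ed)
  (ed_onto : forall A, A \in edgeset e <-> exists i, ed i = A)
  (F : {set {ffun 'I_m -> bool}})
  (hF : universal_set
          (Num.max (p / a2)
             (Num.min (p / a1) (p / a2 + (1 - a1 / a2) * k%:R))) F) :
  Pi_yes a1 a2 e k p <->
  exists2 f, f \in F & ECPi_yes a1 a2 e (colour_of ed f) k p.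
Proof.
have a1p : 0 < a1 by lra.
have a12 : a1 <= 2 * a2 by lra.
split; last first.
  case=> f _ [X [hX _ hv]]; exists X; split => //.
  by apply: le_trans hv; apply: val_le.
case=> X [hX hv].
set EX := [set A in edgeset e | A \subset X].
have hs : forall A, A \in enum EX -> exists x y, [/\ x \in X, y \in X & A = [set x; y]].
  move=> A; rewrite mem_enum inE => /andP[/(edge2 hG) [x [y [_ _ ->]]]].
  rewrite subUset !sub1set => /andP[xX yX]; by exists x, y.
have [S [Ss hS hc]] := forest hs.
have SEX : forall A, A \in S -> A \in EX by move=> A /Ss; rewrite mem_enum.
set I := [set i | (ed i \in S) || (ed i \in cutset e X)].
pose f' := fun i => ~~ (ed i \in S).
have cardI : (#|I|%:R : R) <= Num.max (p / a2)
             (Num.min (p / a1) (p / a2 + (1 - a1 / a2) * k%:R)).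
  have h1 : (#|I| <= #|S| + nCut e X)%N.
    rewrite -(card_imset I ed_inj).
    apply: (leq_trans (subset_leq_card (_ : _ \subset S :|: cutset e X))).
      apply/subsetP => A /imsetP[i]; rewrite inE => hi ->; by rewrite inE.
    by case: (leq_card_setU S (cutset e X)).
  have h2 : (#|S| <= nE e X)%N.
    by apply: subset_leq_card; apply/subsetP => A /SEX.
  have h3 : (#|S| <= k)%N by rewrite -hX; lia.
  apply: le_trans (_ : (#|S|%:R + (nCut e X)%:R : R) <= _).
    by rewrite -natrD ler_nat.
  apply: (@arith R a1 a2 _ (nE e X)%:R) => //; rewrite ?ler_nat //.
have [f fF hf] := hF I cardI f'.
have fS : forall i, ed i \in S -> f i = false.
  move=> i hi; rewrite hf; first by rewrite /f' hi.
  by rewrite inE hi.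
exists f => //; exists X; split => //.
- move=> A hA.
  have Ae : A \in edgeset e by move: hA; rewrite inE => /andP[].
  have [i hi] := (ed_onto A).1 Ae.
  rewrite /colour_of; apply/existsP; exists i; rewrite hi eqxx /= hf; last by rewrite inE hi hA orbT.
  rewrite /f' hi; apply/negP => /SEX; rewrite inE => /andP[_ AX].
  move: hA; rewrite inE => /andP[_]; rewrite (setIidPl AX).
  have [x [y [_ nxy ->]]] := edge2 hG Ae.
  by rewrite cards2 nxy.
- rewrite val_eq //.
  move=> x y xX yX exy.
  have : [set x; y] \in enum EX.
    rewrite mem_enum inE subUset !sub1set xX yX andbT.
    by rewrite andbT inE; apply/existsP; exists x; apply/existsP; exists y; rewrite exy eqxx.
  move/hc; apply: connect_sub => u v huv; apply: connect1.
  have := SEX _ huv; rewrite inE => /andP[huvE huvX].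
  rewrite /red_rel /= (@edge_e _ _ hG _ _ huvE).
  move: huvX; rewrite subUset !sub1set => /andP[-> ->] /=.
  have [i hi] := (ed_onto _).1 huvE.
  apply/negP => /existsP[j /andP[/eqP hj fj]].
  have ji : j = i by apply: ed_inj; rewrite hj hi.
  by move: fj; rewrite ji fS // hi.
Qed.
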